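(* Let $R$ be a semifield, $\phi:\underline n\to\underline m$ a surjective map of sets, $(X_j)_{j\in\underline m}$ and $(Y_i)_{i\in\underline n}$ families of $R$-convex sets, and for each $j\in\underline m$ let $f_j:\prod_{i\in\phi^{-1}(j)}Y_i\to X_j$ be a $|\phi^{-1}(j)|$-convex map. Then there is a unique convex map $F:\bigotimes_{i\in\underline n}Y_i\to\bigotimes_{j\in\underline m}X_j$ such that $F\circ U_{(Y_i)}=U_{(X_j)}\circ\prod_jf_j$, where $\prod_jf_j:\prod_{i\in\underline n}Y_i\to\prod_{j\in\underline m}X_j$ sends $(y_i)_i$ to $(f_j((y_i)_{i\in\phi^{-1}(j)}))_j$.
   Context: A semifield is a commutative semiring in which every nonzero element is invertible. $D_R$ is the monad on $\mathsf{Set}$ of finitely supported $R$-valued distributions summing to $1$; $R$-convex sets are $D_R$-algebras, convex maps are algebra maps. $\underline n=\{1,\dots,n\}$. A map $\prod_{i\in S}A_i\to Z$ from a product of convex sets is $|S|$-convex if it is convex in each variable separately. $\bigotimes_{i\in\underline n}Y_i$ is the quotient of $D_R(\prod_iY_i)$ by the smallest convex equivalence relation containing $1\bullet(\sum_{k_i}\alpha^i_{k_i}y^i_{k_i})_{i}\sim\sum_{(k_1,\dots,k_n)}\alpha^1_{k_1}\cdots\alpha^n_{k_n}\bullet(y^1_{k_1},\dots,y^n_{k_n})$; $U_{(Y_i)}:\prod_iY_i\to\bigotimes_iY_i$ sends $(y_1,\dots,y_n)$ to $y_1\otimes\cdots\otimes y_n$, the class of $1\bullet(y_1,\dots,y_n)$.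 This map is $n$-convex and every $n$-convex map out of $\prod_iY_i$ factors uniquely through it by a convex map. *)

(* Defs.v *)
From HB Require Import structures.
From mathcomp Require Import all_boot all_order all_algebra.
From mathcomp Require Import boolp classical_sets functions cardinality fsbigop.
Set Implicit Arguments. Unset Strict Implicit. Unset Printing Implicit Defensive.
Import Order.TTheory GRing.Theory.
Local Open Scope classical_set_scope.
Local Open Scope ring_scope.

Section Dist.
Variable R : comNzSemiRingType.

Definition fsum (X : Type) (d : X -> R) : R :=
  \sum_(x \in [set: {classic X}]) d x.

Definition dsupp (X : Type) (d : X -> R) : set X := [set x | d x != 0].

Definition is_dist (X : Type) (d : X -> R) : Prop :=
  finite_set (dsupp d) /\ fsum d = 1.

Definition dist (X : Type) : Type := {d : X -> R | is_dist d}.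

Lemma sum_restrict (X : Type) (A S : set {classic X}) (g : X -> R) :
  (forall x, ~ S x -> g x = 0) ->
  \sum_(x \in A) g x = \sum_(x \in A `&` S) g x.
Proof.
move=> gS; apply/esym/fsbig_widen => // x [Ax] /not_andP [//|/gS h]; exact: h.
Qed.

Lemma fsum_supp (X : Type) (g : X -> R) (S : set {classic X}) :
  dsupp g `<=` S -> fsum g = \sum_(x \in S) g x.
Proof.
move=> sS; rewrite /fsum (sum_restrict _ (S := S)) ?setTI //.
by move=> x Sx; apply/eqP; apply: contra_notT Sx => /sS.
Qed.

Definition delta_raw (X : Type) (x : X) : X -> R :=
  fun y => if `[< y = x >] then 1 else 0.

Lemma delta_is_dist (X : Type) (x : X) : is_dist (delta_raw x).
Proof.
have sx : dsupp (delta_raw x) `<=` [set x].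
  by move=> y; rewrite /dsupp /delta_raw /=; case: asboolP => // _; rewrite eqxx.
split; first exact: sub_finite_set sx (finite_set1 x).
rewrite (fsum_supp (S := [set x : {classic X}])) // fsbig_set1 /delta_raw.
by case: asboolP.
Qed.

Definition ddelta (X : Type) (x : X) : dist X := exist _ _ (delta_is_dist x).

Definition dmap_raw (X Y : Type) (f : X -> Y) (d : dist X) : Y -> R :=
  fun y => \sum_(x \in [set x : {classic X} | f x = y]) sval d x.

Lemma dmap_is_dist (X Y : Type) (f : X -> Y) (d : dist X) :
  is_dist (dmap_raw f d).
Proof.
case: d => d [dfin d1] /=.
have sS : dsupp (dmap_raw f (exist _ d (conj dfin d1))) `<=` f @` dsupp d.
  move=> y; rewrite /dsupp /dmap_raw /=; apply: contraNP => ny.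
  apply/eqP; apply: fsbig1 => x /= fxy; apply/eqP; apply: contra_notT ny => dx.
  by exists x.
split; first exact: sub_finite_set sS (finite_image _ dfin).
rewrite (fsum_supp (S := (f @` dsupp d : set {classic Y}))) //.
have inner : forall y : Y, dmap_raw f (exist _ d (conj dfin d1)) y =
   \sum_(x \in (dsupp d : set {classic X})) (if `[< f x = y >] then d x else 0).
  move=> y; rewrite /dmap_raw /= (sum_restrict _ (S := dsupp d)); last first.
    by move=> x; rewrite /dsupp /= => /negP; rewrite negbK => /eqP.
  rewrite [RHS](sum_restrict _ (S := [set x | f x = y])); last first.
    by move=> x fxy; case: asboolP.
  rewrite setIC; apply: eq_fsbigr => x; rewrite inE => -[_ /= ->].
  by case: asboolP.
under eq_fsbigr => y _ do rewrite inner.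
rewrite exchange_fsbig //; last first.
  exact: finite_image.
rewrite -d1 (fsum_supp (S := (dsupp d : set {classic X}))) //.
apply: eq_fsbigr => x; rewrite inE => dx.
have fx : (f @` dsupp d : set {classic Y}) (f x) by exists x.
have fin : finite_set (f @` dsupp d : set {classic Y}) by exact: finite_image.
rewrite (fsbigD1 (f x : {classic Y})) //.
rewrite fsbig1; first by rewrite Monoid.simpm; case: asboolP.
by move=> y [_ /= yfx]; case: asboolP => // fxy; exfalso; apply: yfx; rewrite fxy.
Qed.

Definition dmap (X Y : Type) (f : X -> Y) (d : dist X) : dist Y :=
  exist _ _ (dmap_is_dist f d).

Definition dmu_raw (X : Type) (P : dist (dist X)) : X -> R :=
  fun x => \sum_(e \in [set: {classic (dist X)}]) sval P e * sval e x.

Lemma dmu_is_dist (X : Type) (P : dist (dist X)) : is_dist (dmu_raw P).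
Proof.
case: P => P [Pfin P1].
set U : set {classic X} := \bigcup_(e in (dsupp P : set {classic (dist X)})) dsupp (sval e).
have Ufin : finite_set U.
  apply: bigcup_finite => // e _; by case: e => e [].
have sU : dsupp (dmu_raw (exist _ P (conj Pfin P1))) `<=` U.
  move=> x; rewrite /dsupp /dmu_raw /=; apply: contraNP => nx.
  apply/eqP; apply: fsbig1 => e _; apply/eqP.
  have [P0|Pe] := eqVneq (P e) 0; first by rewrite P0 mul0r.
  have [e0|ex] := eqVneq (sval e x) 0; first by rewrite e0 mulr0.
  by exfalso; apply: nx; exists e.
split; first exact: sub_finite_set sU Ufin.
rewrite (fsum_supp (S := U)) // /dmu_raw /=.
have inner : forall x : X, \sum_(e \in [set: {classic (dist X)}]) P e * sval e x =
   \sum_(e \in (dsupp P : set {classic (dist X)})) P e * sval e x.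
  move=> x; rewrite (sum_restrict _ (S := dsupp P)) ?setTI //.
  by move=> e; rewrite /dsupp /= => /negP; rewrite negbK => /eqP ->; rewrite mul0r.
under eq_fsbigr => x _ do rewrite inner.
rewrite exchange_fsbig //.
rewrite -P1 (fsum_supp (S := (dsupp P : set {classic (dist X)}))) //.
apply: eq_fsbigr => e; rewrite inE => Pe.
rewrite -fsbig_distrr //.
have [_ e1] := svalP e.
rewrite -[RHS]mulr1; congr (_ * _); rewrite -e1 (fsum_supp (S := U)) //.
by move=> x ex; exists e.
Qed.

Definition dmu (X : Type) (P : dist (dist X)) : dist X :=
  exist _ _ (dmu_is_dist P).

End Dist.

Arguments ddelta {R X} x.
Arguments dmap {R X Y} f d.
Arguments dmu {R X} P.

(** R-convex sets = D_R-algebras *)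
Section Convex.
Variable R : comNzSemiRingType.

Definition alg_laws (A : Type) (a : dist R A -> A) : Prop :=
  (forall x : A, a (ddelta x) = x) /\
  (forall P : dist R (dist R A), a (dmu P) = a (dmap a P)).

Record convType := ConvType {
  conv_car :> Type;
  conv_alg : dist R conv_car -> conv_car;
  conv_lawsP : alg_laws conv_alg }.

Definition conv_hom (A B : Type) (a : dist R A -> A) (b : dist R B -> B)
  (f : A -> B) : Prop := forall d : dist R A, f (a d) = b (dmap f d).

Definition convex (A B : convType) (f : A -> B) : Prop :=
  conv_hom (@conv_alg A) (@conv_alg B) f.

Definition multiconvex (I : eqType) (A : I -> convType) (Z : convType)
  (g : (forall i, A i) -> Z) : Prop :=
  forall (y : forall i, A i) (i : I), convex (fun a : A i => g (dfwith y a)).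

Definition conv_equiv (A : Type) (a : dist R A -> A) (E : A -> A -> Prop) : Prop :=
  [/\ (forall x, E x x), (forall x y, E x y -> E y x),
      (forall x y z, E x y -> E y z -> E x z) &
      (forall d : dist R (A * A), (forall p, sval d p != 0 -> E p.1 p.2) ->
         E (a (dmap fst d)) (a (dmap snd d)))].

Section Tensor.
Variables (n : nat) (Y : 'I_n -> convType).

Definition prodY : Type := forall i : 'I_n, Y i.

Definition tgen (u v : dist R prodY) : Prop :=
  exists d : forall i : 'I_n, dist R (Y i),
    u = ddelta (fun i => conv_alg (d i)) /\
    forall y : prodY, sval v y = \prod_(i < n) sval (d i) (y i).

Definition trel (u v : dist R prodY) : Prop :=
  forall E : dist R prodY -> dist R prodY -> Prop,
    conv_equiv (@dmu R prodY) E -> (forall a b, tgen a b -> E a b) -> E u v.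

Definition tensor : Type := {C : dist R prodY -> Prop | exists u, C = trel u}.

Definition tproj (u : dist R prodY) : tensor :=
  exist _ (trel u) (ex_intro _ u erefl).

Definition trep (t : tensor) : dist R prodY := sval (cid (svalP t)).

Definition tensor_alg (D : dist R tensor) : tensor :=
  tproj (dmu (dmap trep D)).

Definition tensorU (y : prodY) : tensor := tproj (ddelta y).

End Tensor.
End Convex.

Arguments tensor_alg {R n Y} D.
Arguments tensorU {R n Y} y.
Arguments multiconvex {R I} A {Z} g.
Arguments convex {R A B} f.
Arguments conv_hom {R A B} a b f.

(* Main.v *)
Require Import Defs.
From HB Require Import structures.
From mathcomp Require Import all_boot all_order all_algebra.
From mathcomp Require Import boolp classical_sets functions cardinality fsbigop.
Import GRing.Theory.
Local Open Scope ring_scope.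

Section Tools.
Local Open Scope classical_set_scope.
Variable R : comNzSemiRingType.

Definition ind (P : Prop) : R := if `[< P >] then 1 else 0.

Lemma indT {P : Prop} : P -> ind P = 1.
Proof. by rewrite /ind; case: asboolP. Qed.
Lemma indF {P : Prop} : ~ P -> ind P = 0.
Proof. by rewrite /ind; case: asboolP. Qed.

Lemma dist_eq {X} {d e : dist R X} : (forall x, sval d x = sval e x) -> d = e.
Proof.
case: d e => [d hd] [e he] /= h; have ? := funext h; subst e.
congr exist; exact: Prop_irrelevance.
Qed.

Lemma dfin {X} (d : dist R X) : finite_set (dsupp (sval d)).
Proof. by case: d => ? []. Qed.

Lemma fsum_single {X} {g : X -> R} x0 :
  (forall x, x <> x0 -> g x = 0) -> fsum g = g x0.
Proof.
move=> h; rewrite (fsum_supp (S := [set x0 : {classic X}])); first by rewrite fsbig_set1.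
move=> x; rewrite /dsupp /= => gx; apply: contrapT => nx.
by move/eqP: gx; apply; exact: h.
Qed.

Lemma fsum0 {X} {g : X -> R} : (forall x, g x = 0) -> fsum g = 0.
Proof. by move=> h; apply: fsbig1 => x _; exact: h. Qed.

Lemma fsum_ext {X} {g h : X -> R} : (forall x, g x = h x) -> fsum g = fsum h.
Proof. by move=> e; have -> := funext e. Qed.

Lemma fsum_mulr {X} {g : X -> R} c {S : set {classic X}} :
  finite_set S -> (forall x, g x != 0 -> S x) ->
  c * fsum g = fsum (fun x => c * g x).
Proof.
move=> Sf hS; rewrite (fsum_supp (S := S)); last by move=> x /hS.
rewrite (fsum_supp (g := fun x => c * g x) (S := S)); last first.
  move=> x; rewrite /dsupp /= => h; apply: hS; apply: contraNN h => /eqP ->.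
  by rewrite mulr0.
by rewrite fsbig_distrr.
Qed.

Lemma fsum_mull {X} {g : X -> R} c {S : set {classic X}} :
  finite_set S -> (forall x, g x != 0 -> S x) ->
  fsum g * c = fsum (fun x => g x * c).
Proof.
move=> Sf hS; rewrite mulrC (fsum_mulr c Sf hS).
by apply: fsum_ext => x; rewrite mulrC.
Qed.

Lemma fsum_exch {X Y} {g : X -> Y -> R} (A : set {classic X}) (B : set {classic Y}) :
  finite_set A -> finite_set B -> (forall a b, g a b != 0 -> A a /\ B b) ->
  fsum (fun a => fsum (fun b => g a b)) = fsum (fun b => fsum (fun a => g a b)).
Proof.
move=> Af Bf hg.
have eA : forall a, fsum (fun b => g a b) = \sum_(b \in B) g a b.
  by move=> a; apply: fsum_supp => b h; exact: (hg a b h).2.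
have eB : forall b, fsum (fun a => g a b) = \sum_(a \in A) g a b.
  by move=> b; apply: fsum_supp => a h; exact: (hg a b h).1.
rewrite (fsum_ext eA) (fsum_ext eB).
rewrite (fsum_supp (S := A)); last first.
  move=> a; rewrite /dsupp /= => h; apply: contrapT => na; move/eqP: h; apply.
  apply: fsbig1 => b _; apply/eqP; apply: contraT => /hg [] //.
rewrite [RHS](fsum_supp (S := B)); last first.
  move=> b; rewrite /dsupp /= => h; apply: contrapT => nb; move/eqP: h; apply.
  apply: fsbig1 => a _; apply/eqP; apply: contraT => /hg [] //.
exact: exchange_fsbig.
Qed.

Lemma dmap_pt {X Y} (f : X -> Y) (d : dist R X) y :
  sval (dmap f d) y = fsum (fun x => sval d x * ind (f x = y)).
Proof.
rewrite /= /dmap_raw fsbig_mkcond /fsum; apply: eq_fsbigr => x _.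
rewrite /patch; case: (asboolP (f x = y)) => e.
  by rewrite ifT ?indT ?mulr1 // inE.
by rewrite ifF ?indF ?mulr0 //; apply/negbTE; rewrite notin_setE.
Qed.

Lemma dmu_pt {X} (P : dist R (dist R X)) x :
  sval (dmu P) x = fsum (fun e => sval P e * sval e x).
Proof. by []. Qed.

Lemma nz3 {a c : R} {P : Prop} : a * ind P * c != 0 -> a != 0 /\ P.
Proof.
have [->|a0] := eqVneq a 0; first by rewrite !mul0r eqxx.
case: (asboolP P) => p; first by [].
by rewrite indF // mulr0 mul0r eqxx.
Qed.

Lemma CV {X Y} (f : X -> Y) (d : dist R X) (k : Y -> R) :
  fsum (fun y => sval (dmap f d) y * k y) = fsum (fun x => sval d x * k (f x)).
Proof.
have -> : (fun y => sval (dmap f d) y * k y) =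
   (fun y => fsum (fun x => sval d x * ind (f x = y) * k y)).
  apply: funext => y; rewrite dmap_pt (fsum_mull _ (dfin d)) ?dfin //.
  move=> x; rewrite /dsupp /=; apply: contraNN => /eqP ->; by rewrite mul0r.
rewrite (fsum_exch (f @` dsupp (sval d)) (dsupp (sval d)) (finite_image _ (dfin d)) (dfin d)); last first.
  by move=> y x /nz3 [h <-]; split; [exists x | ].
apply: fsum_ext => x; rewrite (fsum_single (f x)) ?indT ?mulr1 //.
by move=> y ny; rewrite indF ?mulr0 ?mul0r // => e; apply: ny.
Qed.


Lemma nzM (a b : R) : a * b != 0 -> a != 0 /\ b != 0.
Proof.
have [->|a0] := eqVneq a 0; first by rewrite mul0r eqxx.
have [->|b0] := eqVneq b 0; first by rewrite mulr0 eqxx.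
by [].
Qed.

Lemma delta_pt {X} (x y : X) : sval (ddelta x : dist R X) y = ind (y = x).
Proof. by []. Qed.

Definition UU {X} (P : dist R (dist R X)) : set {classic X} :=
  \bigcup_(e in (dsupp (sval P) : set {classic (dist R X)})) dsupp (sval e).

Lemma UU_fin {X} (P : dist R (dist R X)) : finite_set (UU P).
Proof. by apply: bigcup_finite => [|e _]; [exact: dfin | exact: dfin]. Qed.

Lemma dmap_delta {X Y} (f : X -> Y) (x : X) : dmap f (ddelta x : dist R X) = (ddelta (f x) : dist R Y).
Proof.
apply: dist_eq => z; rewrite dmap_pt (fsum_single x); last first.
  by move=> y ny; rewrite delta_pt indF ?mul0r // => e; apply: ny; rewrite e.
rewrite !delta_pt (indT (erefl x)) mul1r.
by case: (asboolP (f x = z)) => e; [rewrite !indT | rewrite !indF] => // e'; apply: e.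
Qed.

Lemma dmap_comp {X Y Z} (f : X -> Y) (g : Y -> Z) (d : dist R X) :
  dmap g (dmap f d) = dmap (fun x => g (f x)) d.
Proof.
by apply: dist_eq => z; rewrite !dmap_pt (CV f d (fun y => ind (g y = z))).
Qed.

Lemma dmap_id {X} (d : dist R X) : dmap (fun x => x) d = d.
Proof.
apply: dist_eq => z; rewrite dmap_pt (fsum_single z); first by rewrite indT ?mulr1.
by move=> y ny; rewrite indF ?mulr0 // => e; apply: ny; rewrite e.
Qed.

Lemma dmap_ext {X Y} (f g : X -> Y) (d : dist R X) : (forall x, f x = g x) -> dmap f d = dmap g d.
Proof. by move=> e; have -> := funext e. Qed.

Lemma dmu_dmap_pt {X Y} (h : X -> dist R Y) (d : dist R X) z :
  sval (dmu (dmap h d)) z = fsum (fun a => sval d a * sval (h a) z).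
Proof. by rewrite dmu_pt (CV h d (fun e => sval e z)). Qed.

Lemma dmu_dmap_delta {X} (d : dist R X) : dmu (dmap ddelta d) = d.
Proof.
apply: dist_eq => z; rewrite dmu_dmap_pt (fsum_single z); first by rewrite delta_pt indT ?mulr1.
by move=> y ny; rewrite delta_pt indF ?mulr0 // => e; apply: ny; rewrite e.
Qed.

Lemma dmu_delta {X} (P : dist R X) : dmu (ddelta P : dist R (dist R X)) = P.
Proof.
apply: dist_eq => z; rewrite dmu_pt (fsum_single P); first by rewrite delta_pt indT ?mul1r.
by move=> y ny; rewrite delta_pt indF ?mul0r // => e; apply: ny; rewrite e.
Qed.

Lemma dmap_dmu {X Y} (f : X -> Y) (P : dist R (dist R X)) :
  dmap f (dmu P) = dmu (dmap (dmap f) P).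
Proof.
apply: dist_eq => z; rewrite dmu_dmap_pt dmap_pt.
have -> : (fun x => sval (dmu P) x * ind (f x = z)) =
    (fun x => fsum (fun e => sval P e * sval e x * ind (f x = z))).
  apply: funext => x; rewrite dmu_pt (fsum_mull _ (dfin P)) //.
  by move=> e /nzM [].
have -> : (fun e => sval P e * sval (dmap f e) z) =
    (fun e => fsum (fun x => sval P e * (sval e x * ind (f x = z)))).
  apply: funext => e; rewrite dmap_pt (fsum_mulr _ (dfin e)) //.
  by move=> x /nzM [].
rewrite (fsum_exch (UU P) (dsupp (sval P)) (UU_fin P) (dfin P)); last first.
  by move=> x e /nzM [] /nzM [] Pe ex _; split => //; exists e.
by apply: fsum_ext => e; apply: fsum_ext => x; rewrite mulrA.
Qed.

Lemma dmu_assoc {X} (Q : dist R (dist R (dist R X))) : dmu (dmu Q) = dmu (dmap dmu Q).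
Proof.
apply: dist_eq => z; rewrite dmu_dmap_pt dmu_pt.
have -> : (fun e => sval (dmu Q) e * sval e z) =
    (fun e => fsum (fun E => sval Q E * sval E e * sval e z)).
  apply: funext => e; rewrite dmu_pt (fsum_mull _ (dfin Q)) //.
  by move=> E /nzM [].
have -> : (fun E => sval Q E * sval (dmu E) z) =
    (fun E => fsum (fun e => sval Q E * (sval E e * sval e z))).
  apply: funext => E; rewrite dmu_pt (fsum_mulr _ (dfin E)) //.
  by move=> e /nzM [].
rewrite (fsum_exch (UU Q) (dsupp (sval Q)) (UU_fin Q) (dfin Q)); last first.
  by move=> e E /nzM [] /nzM [] QE Ee _; split => //; exists E.
by apply: fsum_ext => E; apply: fsum_ext => e; rewrite mulrA.
Qed.

Lemma dmap_supp {X Y} {f : X -> Y} {d : dist R X} {y} :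
  sval (dmap f d) y != 0 -> exists x, sval d x != 0 /\ f x = y.
Proof.
rewrite dmap_pt => h; apply: contrapT => nx; move/eqP: h; apply; apply: fsum0 => x.
have [->|dx] := eqVneq (sval d x) 0; first by rewrite mul0r.
by rewrite indF ?mulr0 // => e; apply: nx; exists x.
Qed.

End Tools.


Section TensorProps.
Variables (R : comNzSemiRingType) (n : nat) (Y : 'I_n -> convType R).
Local Notation PY := (prodY Y).
Local Notation TT := (tensor Y).

Lemma trel_equiv : conv_equiv (@dmu R PY) (@trel R n Y).
Proof.
split=> [x E [h1 _ _ _] _|x y hxy E hE hg|x y z hxy hyz E hE hg|d hd E hE hg].
- exact: h1.
- by have [_ h2 _ _] := hE; apply: h2; exact: hxy.
- by have [_ _ h3 _] := hE; apply: (h3 _ y); [exact: hxy | exact: hyz].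
- have [_ _ _ h4] := hE; apply: h4 => p dp; exact: hd p dp E hE hg.
Qed.

Lemma trel_refl (u : dist R PY) : trel u u. Proof. by have [h _ _ _] := trel_equiv. Qed.
Lemma trel_sym {u v : dist R PY} : trel u v -> trel v u. Proof. by have [_ h _ _] := trel_equiv; apply: h. Qed.
Lemma trel_trans {u v w : dist R PY} : trel u v -> trel v w -> trel u w.
Proof. by have [_ _ h _] := trel_equiv; apply: h. Qed.

Lemma exist_eq (C1 C2 : dist R PY -> Prop) p1 p2 :
  C1 = C2 -> exist (fun C => exists u, C = @trel R n Y u) C1 p1 = exist _ C2 p2.
Proof. by move=> e; subst C2; congr exist; exact: Prop_irrelevance. Qed.

Lemma tproj_eq {u v : dist R PY} : trel u v -> tproj u = tproj v.
Proof.
move=> h; apply: exist_eq; apply: funext => w; apply: propext; split => h'.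
  exact: trel_trans (trel_sym h) h'.
exact: trel_trans h h'.
Qed.

Lemma tproj_inj {u v : dist R PY} : tproj u = tproj v -> trel u v.
Proof. by move/(congr1 sval) => /= e; rewrite e; exact: trel_refl. Qed.

Lemma tproj_trep (t : TT) : tproj (trep t) = t.
Proof.
case: t => C hC; rewrite /trep /=; move: (svalP (cid hC)) => e.
apply: exist_eq; move: (svalP _) => p; rewrite (Prop_irrelevance p hC); exact: (esym e).
Qed.

Lemma trel_trep (u : dist R PY) : trel (trep (tproj u)) u.
Proof. by apply: tproj_inj; rewrite tproj_trep. Qed.

Lemma cong_dmu {A} (d : dist R A) (h1 h2 : A -> dist R PY) :
  (forall a, sval d a != 0 -> trel (h1 a) (h2 a)) ->
  trel (dmu (dmap h1 d)) (dmu (dmap h2 d)).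
Proof.
move=> H; have [_ _ _ h4] := trel_equiv.
have H4 := h4 (dmap (fun a => (h1 a, h2 a)) d); rewrite !dmap_comp in H4; apply: H4.
by move=> p dp; have [a [da e]] := dmap_supp R dp; subst p; exact: H.
Qed.

Lemma talg_unit (t : TT) : tensor_alg (ddelta t : dist R TT) = t.
Proof. by rewrite /tensor_alg dmap_delta dmu_delta tproj_trep. Qed.

Lemma tensor_lift {A} (k : A -> PY) (e : dist R A) :
  tensor_alg (dmap (fun a => tensorU (k a)) e) = tproj (dmap k e).
Proof.
rewrite /tensor_alg dmap_comp; apply: tproj_eq.
rewrite -[dmap k e]dmu_dmap_delta dmap_comp.
by apply: cong_dmu => a _; exact: trel_trep.
Qed.

Lemma tproj_U (u : dist R PY) : tproj u = tensor_alg (dmap tensorU u).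
Proof. by have := tensor_lift (fun y => y) u; rewrite dmap_id => <-. Qed.

Lemma talg_mu (P : dist R (dist R TT)) :
  tensor_alg (dmu P) = tensor_alg (dmap tensor_alg P).
Proof.
rewrite /tensor_alg; apply: tproj_eq.
rewrite dmap_comp dmap_dmu dmu_assoc dmap_comp.
apply: cong_dmu => x _; apply: trel_sym; exact: trel_trep.
Qed.

Lemma talg_laws : alg_laws (@tensor_alg R n Y).
Proof. by split; [exact: talg_unit | exact: talg_mu]. Qed.

Lemma tensorU_conv (x : PY) (j : 'I_n) (e : dist R (Y j)) :
  tensorU (dfwith x (conv_alg e)) = tensor_alg (dmap (fun a => tensorU (dfwith x a)) e).
Proof.
rewrite tensor_lift; apply: tproj_eq => E _ hg; apply: hg.
exists (@dfwith 'I_n (fun i => dist R (Y i)) (fun i => ddelta (x i)) j e); split.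
  congr ddelta; apply: functional_extensionality_dep => i; case: (eqVneq j i) => [<-|ne].
    by rewrite !dfwith_in.
  by rewrite !dfwith_out // (conv_lawsP (Y i)).1.
move=> z; rewrite dmap_pt (bigD1 j) //= dfwith_in.
case: (asboolP (forall i, i != j -> z i = x i)) => hz.
  have ez : z = dfwith x (z j).
    apply: functional_extensionality_dep => i; case: (eqVneq j i) => [<-|ne]; first by rewrite dfwith_in.
    by rewrite dfwith_out // hz // eq_sym.
  rewrite (fsum_single _ (z j)); last first.
    by move=> a na; rewrite indF ?mulr0 // => h; apply: na; rewrite -h dfwith_in.
  rewrite indT; last by rewrite -ez.
  rewrite big1 ?mulr1 // => i ij.
  by rewrite dfwith_out 1?eq_sym // delta_pt indT // hz.
have [i [ij zi]] : exists i, i != j /\ z i <> x i.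
  by apply: contrapT => h; apply: hz => i ij; apply: contrapT => ne; apply: h; exists i; split.
rewrite fsum0 => [|a]; last first.
  by rewrite indF ?mulr0 // => h; apply: zi; rewrite -h dfwith_out // eq_sym.
rewrite (bigD1 i) //= dfwith_out 1?eq_sym // delta_pt indF //.
by rewrite mul0r mulr0.
Qed.

End TensorProps.


Section J.
Variables (R : comNzSemiRingType) (n : nat) (Y : 'I_n -> convType R).
Local Notation PY := (prodY Y).
Variables (Z : Type) (za : dist R Z -> Z) (zl : alg_laws za) (g : PY -> Z).
Hypothesis gc : forall (y : PY) (i : 'I_n) (e : dist R (Y i)),
  g (dfwith y (conv_alg e)) = za (dmap (fun a => g (dfwith y a)) e).
Variable d : forall i, dist R (Y i).

Fixpoint pds (s : seq 'I_n) (y : PY) : dist R PY :=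
  match s with
  | [::] => ddelta y
  | k :: s' => dmu (dmap (fun a : Y k => pds s' (dfwith y a)) (d k))
  end.

Lemma pds_J s : uniq s -> forall y : PY,
  g (fun i => if i \in s then conv_alg (d i) else y i) = za (dmap g (pds s y)).
Proof.
elim: s => [_ y|k s IH /andP [ks us] y]; rewrite /=.
  rewrite dmap_delta zl.1; congr g; apply: functional_extensionality_dep => i.
have e1 : (fun i => if i \in k :: s then conv_alg (d i) else y i) =
    dfwith (fun i => if i \in s then conv_alg (d i) else y i) (conv_alg (d k)).
  apply: functional_extensionality_dep => i; case: (eqVneq k i) => [<-|ne].
    by rewrite dfwith_in inE eqxx.
  by rewrite dfwith_out // inE eq_sym (negbTE ne).
rewrite e1 gc.
have e2 : forall a : Y k, g (dfwith (fun i => if i \in s then conv_alg (d i) else y i) a)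
   = za (dmap g (pds s (dfwith y a))).
  move=> a; rewrite -(IH us); congr g; apply: functional_extensionality_dep => i.
  case: (eqVneq k i) => [<-|ne]; first by rewrite (negbTE ks); rewrite !(@dfwith_in _ (fun i => conv_car (Y i))).
  by rewrite !dfwith_out.
rewrite (dmap_ext _ _ (fun a => za (dmap g (pds s (dfwith y a)))) _ e2).
by rewrite dmap_dmu zl.2 !dmap_comp.
Qed.

Lemma pds_pt s : uniq s -> forall (y z : PY),
  sval (pds s y) z = \prod_(i <- s) sval (d i) (z i) * ind R (forall i, i \notin s -> z i = y i).
Proof.
elim: s => [_ y z|k s IH /andP [ks us] y z].
  change (ind R (z = y) = \prod_(i <- [::]) sval (d i) (z i) * ind R (forall i, i \notin [::] -> z i = y i)).
  rewrite big_nil mul1r; congr ind; apply: propext; split => [-> //|h].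
  by apply: functional_extensionality_dep => i; apply: h; rewrite in_nil.
rewrite dmu_dmap_pt (fsum_single _ (z k)); last first.
  move=> a na; rewrite IH // indF ?mulr0 // => h; apply: na.
  by have := h k ks; rewrite dfwith_in => ->.
rewrite IH // big_cons mulrA; congr (_ * ind _ _); apply: propext; split => h i.
  rewrite inE negb_or => /andP [ik iS]; rewrite h //.
  by rewrite dfwith_out // eq_sym.
move=> iS; case: (eqVneq k i) => [<-|ne]; first by rewrite dfwith_in.
by rewrite dfwith_out // h // inE negb_or eq_sym ne.
Qed.

Lemma Jlemma (v : dist R PY) :
  (forall z, sval v z = \prod_(i < n) sval (d i) (z i)) ->
  g (fun i => conv_alg (d i)) = za (dmap g v).
Proof.
move=> hv; pose y : PY := fun i => conv_alg (d i).
have := @pds_J (enum 'I_n) (enum_uniq 'I_n) y.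
have -> : (fun i => if i \in enum 'I_n then conv_alg (d i) else y i) = y.
  by apply: functional_extensionality_dep => i; rewrite mem_enum.
move=> ->; congr (za (dmap g _)); apply: dist_eq => z.
rewrite pds_pt ?enum_uniq // indT ?mulr1; last by move=> i; rewrite mem_enum.
by rewrite hv big_enum.
Qed.

End J.


Section Main.
Variables (R : comNzSemiRingType) (n m : nat) (phi : 'I_n -> 'I_m)
  (X : 'I_m -> convType R) (Y : 'I_n -> convType R)
  (f : forall j : 'I_m, (forall i : {i : 'I_n | phi i == j}, Y (sval i)) -> X j)
  (f_multi : forall j : 'I_m,
     multiconvex (fun i : {i : 'I_n | phi i == j} => Y (sval i)) (f j)).

Definition GG (y : prodY Y) : prodY X := fun j => f j (fun i => y (sval i)).

Definition fib (i : 'I_n) : {i0 : 'I_n | phi i0 == phi i} := exist _ i (eqxx (phi i)).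

Definition hh (y : prodY Y) {i : 'I_n} (a : Y i) : X (phi i) :=
  f (phi i) (@dfwith _ (fun i0 : {i0 : 'I_n | phi i0 == phi i} => conv_car (Y (sval i0)))
     (fun i0 => y (sval i0)) (fib i) a).

Lemma G_dfwith (y : prodY Y) (i : 'I_n) (a : Y i) :
  GG (@dfwith _ (fun j => conv_car (Y j)) y i a) =
  @dfwith _ (fun j => conv_car (X j)) (GG y) (phi i) (hh y a).
Proof.
apply: functional_extensionality_dep => j; rewrite /GG.
case: (eqVneq (phi i) j) => [e|ne].
  case: j / e; rewrite (@dfwith_in _ (fun j => conv_car (X j))) /hh.
  congr (f (phi i)); apply: functional_extensionality_dep => -[i0 p] /=.
  case: (eqVneq i i0) => [e|ne].
    subst i0; have -> : p = eqxx (phi i) by apply: bool_irrelevance.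
    rewrite (@dfwith_in _ (fun j => conv_car (Y j))).
    by rewrite /fib (@dfwith_in _ (fun i0 : {i0 : 'I_n | phi i0 == phi i} => conv_car (Y (sval i0)))).
  rewrite (@dfwith_out _ (fun j => conv_car (Y j))) //.
  rewrite (@dfwith_out _ (fun i0 : {i0 : 'I_n | phi i0 == phi i} => conv_car (Y (sval i0)))) //.
rewrite (@dfwith_out _ (fun j => conv_car (X j))) //.
congr (f j); apply: functional_extensionality_dep => -[i0 p] /=.
rewrite (@dfwith_out _ (fun j => conv_car (Y j))) //.
by move/eqP: p => p'; apply/eqP => e; move: ne; rewrite e p' eqxx.
Qed.

Definition Phi (y : prodY Y) : tensor X := tensorU (GG y).

Lemma Phi_conv (y : prodY Y) (i : 'I_n) (e : dist R (Y i)) :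
  Phi (dfwith y (conv_alg e)) = tensor_alg (dmap (fun a => Phi (dfwith y a)) e).
Proof.
rewrite /Phi G_dfwith.
have -> : hh y (conv_alg e) = conv_alg (dmap (hh y) e).
  exact: (f_multi (phi i) (fun i0 => y (sval i0)) (fib i) e).
rewrite tensorU_conv dmap_comp; congr tensor_alg; apply: dmap_ext => a.
by rewrite G_dfwith.
Qed.

Lemma wd (u v : dist R (prodY Y)) : trel u v -> trel (dmap GG u) (dmap GG v).
Proof.
move=> h; apply: (h (fun u v => trel (dmap GG u) (dmap GG v))).
  split.
  - by move=> x; exact: trel_refl.
  - by move=> x y; exact: trel_sym.
  - by move=> x y z; exact: trel_trans.
  - move=> d hd; rewrite !dmap_dmu !dmap_comp; apply: cong_dmu => p dp; exact: hd p dp.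
move=> a b [dd [-> hb]]; rewrite dmap_delta; apply: tproj_inj.
have hJ := Jlemma _ _ _ _ _ (talg_laws _ _ X) _ Phi_conv _ _ hb.
by rewrite -tensor_lift -hJ.
Qed.

Definition FF (t : tensor Y) : tensor X := tproj (dmap GG (trep t)).

Lemma F_U (y : prodY Y) : FF (tensorU y) = tensorU (GG y).
Proof.
rewrite /FF; apply: tproj_eq.
have -> : (ddelta (GG y) : dist R (prodY X)) = dmap GG (ddelta y) by rewrite dmap_delta.
by apply: wd; exact: trel_trep.
Qed.

Lemma F_hom : conv_hom tensor_alg tensor_alg FF.
Proof.
move=> D; rewrite /FF /tensor_alg; apply: tproj_eq.
apply: (@trel_trans _ _ _ _ _ _ (wd _ _ (trel_trep _ _ _ _))).
rewrite dmap_dmu !dmap_comp; apply: cong_dmu => t _.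
by apply: trel_sym; exact: trel_trep.
Qed.

Lemma F_uniq (F' : tensor Y -> tensor X) :
  conv_hom tensor_alg tensor_alg F' -> (forall y, F' (tensorU y) = tensorU (GG y)) ->
  forall t, F' t = tensor_alg (dmap (fun y => tensorU (GG y)) (trep t)).
Proof.
move=> hF hU t; rewrite -{1}(tproj_trep _ _ _ t) tproj_U hF dmap_comp.
by congr tensor_alg; apply: dmap_ext => y; exact: hU.
Qed.

End Main.


Theorem mainTheorem16 (R : comNzSemiRingType)
  (R_semifield : forall x : R, x != 0 -> exists y : R, x * y = 1)
  (n m : nat) (phi : 'I_n -> 'I_m) (phi_surj : forall j : 'I_m, exists i, phi i = j)
  (X : 'I_m -> convType R) (Y : 'I_n -> convType R)
  (f : forall j : 'I_m, (forall i : {i : 'I_n | phi i == j}, Y (sval i)) -> X j)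
  (f_multi : forall j : 'I_m,
     multiconvex (fun i : {i : 'I_n | phi i == j} => Y (sval i)) (f j)) :
  exists! F : tensor Y -> tensor X,
    conv_hom tensor_alg tensor_alg F /\
    forall y : prodY Y,
      F (tensorU y) = tensorU (fun j : 'I_m => f j (fun i => y (sval i))).
Proof.
exists (@FF R n m phi X Y f); split.
  split; first exact: (@F_hom R n m phi X Y f f_multi).
  by move=> y; exact: (@F_U R n m phi X Y f f_multi).
move=> F' [h1 h2]; apply: funext => t.
rewrite (@F_uniq R n m phi X Y f F' h1 h2).
by rewrite (@F_uniq R n m phi X Y f _ (@F_hom R n m phi X Y f f_multi) (@F_U R n m phi X Y f f_multi)).
Qed.
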